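(* Let $K\subseteq\mathbb{R}$ be a field, $K^+=\{x\in K:x>0\}$, and suppose $K^+=H_1\sqcup H_2\sqcup\cdots\sqcup H_\lambda$ is a partition of $K^+$ into pairwise disjoint subsets each closed under addition and multiplication (indexed by some index set of size $\lambda$). Then: (a) If $a, a+q\in H_1$ for some $q\in\mathbb{Q}^+$, then $a+r\in H_1$ for every $r\in\mathbb{Q}^+$. (b) If $\lambda$ is finite, then for every $a\in K^+$ and every $q\in\mathbb{Q}$ with $a+q>0$, the elements $a$ and $a+q$ lie in the same part of the partition. *)

(* Defs.v *)
From Stdlib Require Export Reals QArith Qreals List.
Open Scope R_scope.

Definition is_subfield (K : R -> Prop) : Prop :=
  K 0 /\ K 1 /\
  (forall x y, K x -> K y -> K (x + y)) /\
  (forall x, K x -> K (- x)) /\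
  (forall x y, K x -> K y -> K (x * y)) /\
  (forall x, K x -> x <> 0 -> K (/ x)).

Definition Kpos (K : R -> Prop) (x : R) : Prop := K x /\ 0 < x.

Definition add_mul_partition (K : R -> Prop) {I : Type} (H : I -> R -> Prop)
  : Prop :=
  (forall x, Kpos K x <-> exists i, H i x) /\
  (forall i j x, H i x -> H j x -> i = j) /\
  (forall i x y, H i x -> H i y -> H i (x + y)) /\
  (forall i x y, H i x -> H i y -> H i (x * y)).

Definition finite_type (I : Type) : Prop :=
  exists l : list I, forall i : I, In i l.

(* Main.v *)
Require Import Defs.
From Stdlib Require Import Reals QArith Qreals List.
From Stdlib Require Import Lra Lia ClassicalEpsilon Classical.
Open Scope R_scope.

Definition ratR (x : R) : Prop := exists q : Q, x = Q2R q.

Lemma ratR_plus x y : ratR x -> ratR y -> ratR (x + y).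
Proof. intros [a ->] [b ->]. exists (a + b)%Q. now rewrite Q2R_plus. Qed.
Lemma ratR_mult x y : ratR x -> ratR y -> ratR (x * y).
Proof. intros [a ->] [b ->]. exists (a * b)%Q. now rewrite Q2R_mult. Qed.
Lemma ratR_opp x : ratR x -> ratR (- x).
Proof. intros [a ->]. exists (- a)%Q. now rewrite Q2R_opp. Qed.
Lemma ratR_minus x y : ratR x -> ratR y -> ratR (x - y).
Proof. intros. unfold Rminus. apply ratR_plus; auto. apply ratR_opp; auto. Qed.
Lemma Q2R0 : Q2R 0 = 0.
Proof. unfold Q2R; simpl. field. Qed.
Lemma ratR_inv x : ratR x -> x <> 0 -> ratR (/ x).
Proof.
  intros [a ->] Hx. exists (/ a)%Q. rewrite Q2R_inv; auto.
  intro E. apply Hx. rewrite (Qeq_eqR _ _ E). apply Q2R0.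
Qed.
Lemma ratR_div x y : ratR x -> ratR y -> y <> 0 -> ratR (x / y).
Proof. intros. unfold Rdiv. apply ratR_mult; auto. apply ratR_inv; auto. Qed.
Lemma ratR_IZR z : ratR (IZR z).
Proof. exists (inject_Z z). unfold Q2R; simpl. field. Qed.
Lemma ratR_INR n : ratR (INR n).
Proof. rewrite INR_IZR_INZ. apply ratR_IZR. Qed.
Lemma ratR_pow x n : ratR x -> ratR (x ^ n).
Proof.
  intros Hx. induction n; simpl. apply (ratR_IZR 1). apply ratR_mult; auto.
Qed.

Lemma K_INR K (hK : is_subfield K) n : K (INR n).
Proof.
  destruct hK as (K0 & K1 & Kadd & _). induction n.
  simpl; auto. rewrite S_INR. auto.
Qed.

Lemma K_IZR K (hK : is_subfield K) z : K (IZR z).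
Proof.
  assert (HP : forall p, K (IZR (Zpos p))).
  { intro p. rewrite <- Znat.positive_nat_Z, <- INR_IZR_INZ. apply K_INR; auto. }
  destruct hK as (K0 & K1 & Kadd & Kopp & _).
  destruct z; auto.
  all: try (change (IZR (Zneg p)) with (- IZR (Zpos p)); auto).
Qed.

Lemma K_ratR K (hK : is_subfield K) x : ratR x -> K x.
Proof.
  intros [[n d] ->]. unfold Q2R; simpl.
  pose proof (K_IZR K hK n). pose proof (K_IZR K hK (Zpos d)).
  destruct hK as (K0 & K1 & Kadd & Kopp & Kmul & Kinv).
  apply Kmul; auto. all: try (apply Kinv; auto; apply not_0_IZR; discriminate).
Qed.

Lemma nat_arch r : exists n, r < INR n.
Proof.
  destruct (archimed r) as [H1 _]. exists (Z.to_nat (up r)).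
  assert (IZR (up r) <= INR (Z.to_nat (up r))).
  { rewrite INR_IZR_INZ. apply IZR_le. lia. }
  lra.
Qed.


Lemma part_K K I (H : I -> R -> Prop) (hH : add_mul_partition K H) i x :
  H i x -> K x /\ 0 < x.
Proof.
  intros Hx. destruct hH as (cov & _). apply (proj2 (cov x)). eauto.
Qed.

Lemma part_nsum K I (H : I -> R -> Prop) (hH : add_mul_partition K H) i z n :
  H i z -> H i (INR (S n) * z).
Proof.
  destruct hH as (cov & disj & hadd & hmul). intros Hz.
  induction n.
  - replace (INR 1 * z) with z by (simpl; ring). auto.
  - replace (INR (S (S n)) * z) with (INR (S n) * z + z)
      by (rewrite (S_INR (S n)); ring). auto.
Qed.

Lemma part_scale K I (H : I -> R -> Prop) (hK : is_subfield K)
  (hH : add_mul_partition K H) i y c :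
  ratR c -> 0 < c -> H i y -> H i (c * y).
Proof.
  intros Hrc Hc Hy.
  destruct (part_K K I H hH i y Hy) as [Ky ypos].
  pose proof hH as (cov & disj & hadd & hmul).
  assert (Kc : K (c * y)).
  { pose proof (K_ratR K hK c Hrc).
    destruct hK as (K0 & K1 & Kadd & Kopp & Kmul & Kinv). auto. }
  destruct (proj1 (cov (c * y))) as [j Hj].
  { split; auto. apply Rmult_lt_0_compat; auto. }
  destruct Hrc as [[z d] Ec]. unfold Q2R in Ec; simpl in Ec.
  assert (Dp : 0 < IZR (Zpos d)) by (apply IZR_lt; lia).
  assert (Zp : 0 < IZR z).
  { rewrite Ec in Hc.
    apply Rmult_lt_reg_r with (/ IZR (Zpos d)).
    apply Rinv_0_lt_compat; auto. lra. }
  apply lt_IZR in Zp.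
  assert (En : IZR z = INR (S (Z.to_nat z - 1))).
  { rewrite INR_IZR_INZ. f_equal. lia. }
  assert (Em : IZR (Zpos d) = INR (S (Pos.to_nat d - 1))).
  { rewrite INR_IZR_INZ. f_equal. lia. }
  pose proof (part_nsum K I H hH j (c * y) (Pos.to_nat d - 1) Hj) as A.
  pose proof (part_nsum K I H hH i y (Z.to_nat z - 1) Hy) as B.
  assert (E : INR (S (Pos.to_nat d - 1)) * (c * y) = INR (S (Z.to_nat z - 1)) * y).
  { rewrite <- En, <- Em, Ec. field. lra. }
  rewrite E in A. rewrite (disj i j _ B A). auto.
Qed.

Lemma part_double K I (H : I -> R -> Prop) (hK : is_subfield K)
  (hH : add_mul_partition K H) i x s :
  H i x -> H i (x + s) -> ratR s -> 0 < s -> H i (x + 2 * s).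
Proof.
  intros Hx Hxs Hrs Hs.
  destruct (part_K K I H hH i x Hx) as [Kx xpos].
  pose proof hH as (cov & disj & hadd & hmul).
  assert (Kc : K (x + 2 * s)).
  { pose proof (K_ratR K hK (2 * s) (ratR_mult _ _ (ratR_IZR 2) Hrs)).
    destruct hK as (K0 & K1 & Kadd & _). auto. }
  destruct (proj1 (cov (x + 2 * s))) as [j Hj].
  { split; auto. lra. }
  assert (A : H j ((x + 2 * s) * (x + 2 * s))) by auto.
  assert (B : H i (x * x + (4 * s) * (x + s))).
  { apply hadd; auto. apply part_scale with K; auto.
    apply ratR_mult; auto. apply ratR_IZR. lra. }
  replace (x * x + (4 * s) * (x + s)) with ((x + 2 * s) * (x + 2 * s)) in B by ring.
  rewrite (disj i j _ B A). auto.
Qed.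

Lemma part_interval K I (H : I -> R -> Prop) (hK : is_subfield K)
  (hH : add_mul_partition K H) i x s t :
  H i x -> H i (x + s) -> ratR s -> 0 < s -> ratR t -> 0 < t -> t <= s ->
  H i (x + t).
Proof.
  intros Hx Hxs Hrs Hs Hrt Ht Hts.
  destruct (Req_dec t s) as [->|Hne]; auto.
  pose proof hH as (cov & disj & hadd & hmul).
  assert (L1 : t / s < 1).
  { apply Rmult_lt_reg_r with s; auto. unfold Rdiv.
    rewrite Rmult_assoc, Rinv_l; lra. }
  assert (L0 : 0 < t / s) by (apply Rdiv_lt_0_compat; auto).
  assert (Rq : ratR (t / s)) by (apply ratR_div; auto; lra).
  assert (A : H i ((1 - t / s) * x)).
  { apply part_scale with K; auto. apply ratR_minus; auto. apply (ratR_IZR 1). lra. }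
  assert (B : H i ((t / s) * (x + s))) by (apply part_scale with K; auto).
  replace (x + t) with ((1 - t / s) * x + (t / s) * (x + s)) by (field; lra).
  auto.
Qed.

Lemma INR_lt_pow2 n : INR n < 2 ^ n.
Proof.
  induction n. simpl; lra.
  rewrite S_INR. simpl.
  assert (1 <= 2 ^ n) by (apply pow_R1_Rle; lra). lra.
Qed.

Lemma part_shift K I (H : I -> R -> Prop) (hK : is_subfield K)
  (hH : add_mul_partition K H) i x s :
  H i x -> H i (x + s) -> ratR s -> 0 < s ->
  forall r, ratR r -> 0 < r -> H i (x + r).
Proof.
  intros Hx Hxs Hrs Hs r Hrr Hr.
  assert (P : forall n, H i (x + 2 ^ n * s)).
  { induction n.
    - replace (x + 2 ^ 0 * s) with (x + s) by (simpl; ring). auto.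
    - replace (x + 2 ^ S n * s) with (x + 2 * (2 ^ n * s)) by (simpl; ring).
      apply part_double with K; auto.
      apply ratR_mult; auto. apply ratR_pow, ratR_IZR.
      apply Rmult_lt_0_compat; auto. apply pow_lt; lra. }
  destruct (nat_arch (r / s)) as [n Hn].
  pose proof (INR_lt_pow2 n).
  apply part_interval with K (2 ^ n * s); auto.
  apply ratR_mult; auto. apply ratR_pow, ratR_IZR.
  apply Rmult_lt_0_compat; auto. apply pow_lt; lra.
  assert (r < INR n * s).
  { apply Rmult_lt_reg_r with (/ s). apply Rinv_0_lt_compat; auto.
    rewrite Rmult_assoc, Rinv_r; lra. }
  assert (INR n * s <= 2 ^ n * s) by (apply Rmult_le_compat_r; lra).
  lra.
Qed.

Lemma pigeon {I : Type} (l : list I) (hl : forall i, In i l) (d : I) (f : nat -> I) :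
  exists k k', (k < k')%nat /\ (k' <= length l)%nat /\ f k = f k'.
Proof.
  apply NNPP. intro Hn.
  set (L := map f (seq 0 (S (length l)))).
  assert (ND : NoDup L).
  { apply (proj2 (NoDup_nth L (f 0%nat))).
    intros a b Ha Hb E. unfold L in *. rewrite length_map, length_seq in Ha, Hb.
    rewrite !map_nth, !seq_nth in E by auto. simpl in E.
    destruct (Nat.lt_total a b) as [h|[h|h]]; auto; exfalso; apply Hn.
    - exists a, b. repeat split; auto; lia.
    - exists b, a. repeat split; auto; lia. }
  assert (Inc : incl L l) by (intros x _; auto).
  pose proof (NoDup_incl_length ND Inc) as HL.
  unfold L in HL. rewrite length_map, length_seq in HL. lia.
Qed.

Lemma part_B K I (H : I -> R -> Prop) (i1 : I) (hK : is_subfield K)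
  (hH : add_mul_partition K H) :
  finite_type I -> forall a q, Kpos K a -> ratR q -> 0 <= q ->
  exists i, H i a /\ H i (a + q).
Proof.
  intros [l hl] a q [Ka apos] Hrq Hq.
  pose proof hH as (cov & disj & hadd & hmul).
  set (L := length l).
  destruct (nat_arch (INR (S L) / a)) as [M HM].
  assert (P1 : 0 < INR (S L) / a).
  { apply Rdiv_lt_0_compat; auto. apply lt_0_INR. lia. }
  assert (Mp : 0 < INR M) by lra.
  set (e := / INR M).
  assert (ep : 0 < e) by (apply Rinv_0_lt_compat; auto).
  assert (Le : INR (S L) * e < a).
  { unfold e. apply Rmult_lt_reg_r with (INR M); auto.
    rewrite Rmult_assoc, Rinv_l by lra.
    apply Rmult_lt_reg_r with (/ a). apply Rinv_0_lt_compat; auto.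
    replace (a * INR M * / a) with (INR M) by (field; lra).
    unfold Rdiv in HM. lra. }
  assert (re : ratR e) by (apply ratR_inv; [apply ratR_INR | lra]).
  set (p := fun k : nat => a - INR (S k) * e).
  assert (Pk : forall k, (k <= L)%nat -> exists i, H i (p k)).
  { intros k hk. apply (proj1 (cov (p k))). split.
    - unfold p. pose proof (K_INR K hK (S k)). pose proof (K_ratR K hK e re).
      destruct hK as (K0 & K1 & Kadd & Kopp & Kmul & _).
      apply Kadd; auto.
    - unfold p. assert (INR (S k) <= INR (S L)) by (apply le_INR; lia).
      assert (INR (S k) * e <= INR (S L) * e) by (apply Rmult_le_compat_r; lra).
      lra. }
  set (f := fun k => epsilon (inhabits i1) (fun i => H i (p k))).
  assert (Fk : forall k, (k <= L)%nat -> H (f k) (p k)).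
  { intros k hk. unfold f. apply epsilon_spec. auto. }
  destruct (pigeon l hl i1 f) as (k & k' & hkk & hk' & Ef).
  fold L in hk'.
  assert (A : H (f k') (p k)) by (rewrite <- Ef; apply Fk; lia).
  assert (B : H (f k') (p k')) by (apply Fk; lia).
  assert (Lt : INR (S k) < INR (S k')) by (apply lt_INR; lia).
  assert (Sh := part_shift K I H hK hH (f k') (p k') (p k - p k') B).
  exists (f k').
  replace (p k' + (p k - p k')) with (p k) in Sh by ring.
  assert (ratR (INR (S k') * e)) by (apply ratR_mult; auto; apply ratR_INR).
  assert (0 < INR (S k') * e) by (apply Rmult_lt_0_compat; auto; apply lt_0_INR; lia).
  split.
  - replace a with (p k' + INR (S k') * e) by (unfold p; ring).
    apply Sh; auto.
    + unfold p. replace (a - INR (S k) * e - (a - INR (S k') * e))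
        with ((INR (S k') - INR (S k)) * e) by ring.
      apply ratR_mult; auto. apply ratR_minus; apply ratR_INR.
    + unfold p. assert (INR (S k) * e < INR (S k') * e) by (apply Rmult_lt_compat_r; lra).
      lra.
  - replace (a + q) with (p k' + (INR (S k') * e + q)) by (unfold p; ring).
    apply Sh; auto.
    + unfold p. replace (a - INR (S k) * e - (a - INR (S k') * e))
        with ((INR (S k') - INR (S k)) * e) by ring.
      apply ratR_mult; auto. apply ratR_minus; apply ratR_INR.
    + unfold p. assert (INR (S k) * e < INR (S k') * e) by (apply Rmult_lt_compat_r; lra).
      lra.
    + apply ratR_plus; auto.
    + lra.
Qed.

Theorem lemma3p1 (K : R -> Prop) (I : Type) (H : I -> R -> Prop) (i1 : I)
  (hK : is_subfield K) (hH : add_mul_partition K H) :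
  (* (a) *)
  (forall (a : R) (q : Q), (0 < q)%Q -> H i1 a -> H i1 (a + Q2R q) ->
     forall r : Q, (0 < r)%Q -> H i1 (a + Q2R r)) /\
  (* (b) *)
  (finite_type I ->
     forall (a : R) (q : Q), Kpos K a -> 0 < a + Q2R q ->
       exists i : I, H i a /\ H i (a + Q2R q)).
Proof.
  split.
  - intros a q hq Ha Haq r hr.
    apply Qlt_Rlt in hq. apply Qlt_Rlt in hr. rewrite Q2R0 in hq, hr.
    apply part_shift with K (Q2R q); auto.
    exists q; reflexivity. exists r; reflexivity.
  - intros fin a q Ka Hpos.
    destruct (Rle_or_lt 0 (Q2R q)) as [Hq|Hq].
    + apply (part_B K I H i1); auto. exists q; reflexivity.
    + assert (Ka' : Kpos K (a + Q2R q)).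
      { split; auto. destruct Ka as [Ka _].
        pose proof (K_ratR K hK (Q2R q) (ex_intro _ q eq_refl)).
        destruct hK as (K0 & K1 & Kadd & _). auto. }
      destruct (part_B K I H i1 hK hH fin (a + Q2R q) (- Q2R q) Ka')
        as [i [A B]].
      { apply ratR_opp. exists q; reflexivity. }
      { lra. }
      exists i. replace (a + Q2R q + - Q2R q) with a in B by ring. auto.
Qed.
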